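(* Let $A\in\mathbb{R}^{m\times n}$, $b\in\mathbb{R}^m$, and let $Q_k=(q_1,\dots,q_k)$, $k=1,2,\dots$, be the matrices with orthonormal columns generated by the Golub–Kahan bidiagonalization of $A$ started with $b$ (described in the context). For each $k$ let $Q_k^{\perp}\in\mathbb{R}^{n\times(n-k)}$ be a matrix with orthonormal columns such that $(Q_k\ \ Q_k^{\perp})$ is an orthogonal matrix. Let $L\in\mathbb{R}^{p\times n}$. When $p\ge n-k$, we have $$\kappa(LQ_k^{\perp})\ \ge\ \kappa(LQ_{k+1}^{\perp}),\qquad k=2,3,\dots,n-1,$$ where for a matrix $M$ with $r$ columns, $\kappa(M)=\sigma_{\max}(M)/\sigma_{\min}(M)$, $\sigma_{\min}(M)$ being the $r$-th (smallest) singular value of $M$.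
   Context: Golub–Kahan bidiagonalization: set $\beta_1=\|b\|$, $p_1=b/\beta_1$, $\beta_1q_0=0$, and for $i=1,2,\dots$ compute $\alpha_iq_i=A^Tp_i-\beta_iq_{i-1}$ and $\beta_{i+1}p_{i+1}=Aq_i-\alpha_ip_i$, with $\alpha_i,\beta_{i+1}\ge0$ chosen so that $\|q_i\|=\|p_{i+1}\|=1$ (no breakdown assumed). The vectors $q_1,q_2,\dots$ are orthonormal and $Q_k=(q_1,\dots,q_k)$. *)

(* Defs.v *)
From HB Require Import structures.
From mathcomp Require Import all_boot all_order all_algebra.
From mathcomp Require Import reals constructive_ereal.
Set Implicit Arguments. Unset Strict Implicit. Unset Printing Implicit Defensive.
Import Order.TTheory GRing.Theory Num.Theory.
Local Open Scope ring_scope.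

Definition vnorm {R : realType} {m : nat} (v : 'cV[R]_m) : R :=
  Num.sqrt ((v^T *m v) 0 0).

(* Golub--Kahan bidiagonalization.
   gk_state A b i = (p_{i+1}, q_i, alpha_i, beta_{i+1});
   for i = 0 : (p_1, q_0 = 0, alpha_0 := 0 (dummy), beta_1 = ||b||). *)
Fixpoint gk_state {R : realType} {m n : nat} (A : 'M[R]_(m, n)) (b : 'cV[R]_m)
  (i : nat) : 'cV[R]_m * 'cV[R]_n * R * R :=
  match i with
  | 0 => let beta := vnorm b in (beta^-1 *: b, 0, 0, beta)
  | i'.+1 =>
      let '(p, q, _, beta) := gk_state A b i' in
      let w := A^T *m p - beta *: q in
      let alpha := vnorm w in
      let q' := alpha^-1 *: w in
      let z := A *m q' - alpha *: p in
      let beta' := vnorm z in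
      (beta'^-1 *: z, q', alpha, beta')
  end.

Definition gk_p {R : realType} {m n} (A : 'M[R]_(m, n)) b i := (gk_state A b i).1.1.1.
Definition gk_q {R : realType} {m n} (A : 'M[R]_(m, n)) b i := (gk_state A b i).1.1.2.
Definition gk_alpha {R : realType} {m n} (A : 'M[R]_(m, n)) b i := (gk_state A b i).1.2.
Definition gk_beta {R : realType} {m n} (A : 'M[R]_(m, n)) b i := (gk_state A b i).2.

Definition gk_no_breakdown {R : realType} {m n} (A : 'M[R]_(m, n)) b (N : nat) : Prop :=
  (forall i, (i < N)%N -> gk_beta A b i != 0) /\
  (forall i, (1 <= i <= N)%N -> gk_alpha A b i != 0).

Definition GKQ {R : realType} {m n} (A : 'M[R]_(m, n)) b (k : nat) : 'M[R]_(n, k) :=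
  \matrix_(i < n, j < k) (gk_q A b j.+1) i 0.

(* s is the list of singular values of M (with multiplicity), in nonincreasing
   order: the nonnegative square roots of the eigenvalues of M^T M. *)
Definition singular_values {R : realType} {p r : nat} (M : 'M[R]_(p, r)) (s : seq R) : Prop :=
  size s = r /\ sorted (fun x y => y <= x) s /\ all (fun x => 0 <= x) s /\
  char_poly (M^T *m M) = \prod_(x <- s) ('X - (x ^+ 2)%:P).

(* Condition number sigma_max / sigma_min from the sorted list of singular
   values; +oo when sigma_min = 0.  Convention for a matrix with no columns
   (empty list): 1. *)
Definition kappa_sv {R : realType} (s : seq R) : \bar R :=
  match s with
  | [::] => 1%:E
  | x :: _ => let l := last x s in if l == 0 then +oo%E else (x / l)%:E
  end.

(* Main.v *)
Require Import Defs.
From HB Require Import structures.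
From mathcomp Require Import all_boot all_order all_algebra.
From mathcomp Require Import reals constructive_ereal complex.
Import Order.TTheory GRing.Theory Num.Theory Num.Def.
Local Open Scope ring_scope.
From mathcomp Require Import zify.

Set Implicit Arguments. Unset Strict Implicit.
Local Notation fC := (real_complex _).

Lemma fC_conj (R : realType) (x : R) : (fC x)^* = fC x.
Proof. by apply: conj_Creal; rewrite complex_real. Qed.

Lemma tC_mul (C : numClosedFieldType) m n p (A : 'M[C]_(m, n)) (B : 'M[C]_(n, p)) :
  map_mx conjC (A *m B)^T = map_mx conjC B^T *m map_mx conjC A^T.
Proof. by rewrite trmx_mul map_mxM. Qed.

Lemma tCK (C : numClosedFieldType) m n (A : 'M[C]_(m, n)) :
  map_mx conjC (map_mx conjC A^T)^T = A.
Proof. exact: trmxCK. Qed.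

Lemma quad_diag (C : numClosedFieldType) n (y : 'rV[C]_n) (d : 'rV[C]_n) :
  (y *m diag_mx d *m map_mx conjC y^T) 0 0 = \sum_j d 0 j * (y 0 j * (y 0 j)^*).
Proof.
rewrite mxE; apply: eq_bigr => j _; rewrite mul_mx_diag !mxE.
by rewrite mulrAC mulrC.
Qed.

Lemma quad_id (C : numClosedFieldType) n (y : 'rV[C]_n) :
  (y *m map_mx conjC y^T) 0 0 = \sum_j (y 0 j * (y 0 j)^*).
Proof. by rewrite mxE; apply: eq_bigr => j _; rewrite !mxE. Qed.

Lemma rayleigh (R : realType) r (G : 'M[R]_r) (t : seq R) (lo hi : R) :
  G^T = G -> char_poly G = \prod_(x <- t) ('X - x%:P) ->
  (forall x, x \in t -> lo <= x <= hi) ->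
  forall u : 'rV[R]_r,
  lo * (u *m u^T) 0 0 <= (u *m G *m u^T) 0 0 <= hi * (u *m u^T) 0 0.
Proof.
move=> GT cG bt u.
have Gsym i j : G j i = G i j by rewrite -{2}GT mxE.
set Gc := map_mx fC G.
have GcT : map_mx conjC Gc^T = Gc.
  by apply/matrixP => i j; rewrite !mxE fC_conj Gsym.
have normal : Gc \is normalmx by apply/normalmxP; rewrite GcT.
have /orthomx_spectralP GcE := normal.
set P := spectralmx Gc in GcE; set d := spectral_diag Gc in GcE.
have PU : P \is unitarymx := spectral_unitarymx Gc.
have PPt : P *m map_mx conjC P^T = 1%:M by apply/unitarymxP.
have PtP : map_mx conjC P^T *m P = 1%:M by apply: mulmx1C.
rewrite invmx_unitary // in GcE.
have dt j : exists2 x, x \in t & d 0 j = fC x.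
  have : eigenvalue Gc (d 0 j).
    apply/eigenvalueP; exists (delta_mx 0 j *m P).
      rewrite GcE !mulmxA -(mulmxA _ P) PPt mulmx1. have -> : delta_mx 0 j *m diag_mx d = row j (diag_mx d) by rewrite rowE. rewrite row_diag_mx.
      by rewrite scalemxAl.
    apply/eqP => h; have := congr1 (mulmx^~ (map_mx conjC P^T)) h.
    rewrite -mulmxA PPt mulmx1 mul0mx => /matrixP /(_ 0 j).
    by rewrite !mxE !eqxx /= => /eqP; rewrite oner_eq0.
  rewrite eigenvalue_root_char /Gc -map_char_poly cG -(prod_map_poly _ t xpredT).
  rewrite root_prod_XsubC => /mapP [x xt ->]; exists x => //.
set uc := map_mx fC u.
have ucT : map_mx conjC uc^T = map_mx fC u^T.
  by apply/matrixP => i j; rewrite !mxE fC_conj.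
have E1 : fC ((u *m G *m u^T) 0 0) = (uc *m Gc *m map_mx conjC uc^T) 0 0.
  by rewrite ucT -!map_mxM [RHS]mxE.
have E2 : fC ((u *m u^T) 0 0) = (uc *m map_mx conjC uc^T) 0 0.
  by rewrite ucT -!map_mxM [RHS]mxE.
set y := uc *m map_mx conjC P^T.
have yT : map_mx conjC y^T = P *m map_mx conjC uc^T by rewrite tC_mul tCK.
have F1 : (uc *m Gc *m map_mx conjC uc^T) 0 0 = \sum_j d 0 j * (y 0 j * (y 0 j)^*).
  by rewrite -quad_diag yT GcE !mulmxA.
have F2 : (uc *m map_mx conjC uc^T) 0 0 = \sum_j (y 0 j * (y 0 j)^*).
  by rewrite -quad_id yT mulmxA -(mulmxA uc) PtP mulmx1.
apply/andP; split; rewrite -lecR rmorphM /= E1 E2 F1 F2 mulr_sumr; apply: ler_sum => j _;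
  have [x xt ->] := dt j; have /andP[lx xh] := bt x xt;
  by apply: ler_wpM2r; [exact: mul_conjC_ge0 | rewrite lecR].
Qed.

Lemma path_bounds (R : realType) (a : R) s :
  path (fun x y => y <= x) a s -> forall x, x \in a :: s -> last a s <= x <= a.
Proof.
elim: s a => [|b s IH] a /=.
  by move=> _ x; rewrite inE => /eqP ->; rewrite lexx.
move=> /andP[ab pb] x; rewrite inE => /orP[/eqP->|xin].
  have /andP[l _] := IH b pb b (mem_head _ _).
  by rewrite lexx (le_trans l ab).
have /andP[h1 h2] := IH b pb x xin.
by rewrite h1 (le_trans h2 ab).
Qed.

Lemma kappa_ge1 (R : realType) (s : seq R) :
  sorted (fun x y => y <= x) s -> all (fun x => 0 <= x) s -> (1%:E <= kappa_sv s)%E.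
Proof.
case: s => [|a s] // ps ap; rewrite /kappa_sv.
case: eqP => [_|ln0]; first exact: leey.
have /andP[la _] := path_bounds ps (mem_head _ _).
have l0 : 0 <= last a s by move/allP: ap; apply; exact: mem_last.
have lp : 0 < last a s by rewrite lt0r l0 andbT; apply/eqP.
by rewrite lee_fin ler_pdivlMr // mul1r.
Qed.

Lemma orth_sq (R : realType) n N (M : 'M[R]_(n, N)) :
  N = n -> M^T *m M = 1%:M -> M *m M^T = 1%:M.
Proof. by move=> e; subst N; apply: mulmx1C. Qed.

Lemma vvT_gt0 (R : realType) r (v : 'rV[R]_r) : v != 0 -> 0 < (v *m v^T) 0 0.
Proof.
move=> vn0; have [j vj] : exists j, v 0 j != 0.
  case: (pickP (fun j => v 0 j != 0)) => [j vj|h]; first by exists j.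
  exfalso; move/eqP: vn0; apply; apply/matrixP => i l; rewrite ord1 mxE.
  by move: (h l) => /= /negbFE/eqP.
rewrite mxE (bigD1 j) //= mxE.
have h1 : 0 < v 0 j * v 0 j by rewrite -expr2 lt0r sqr_ge0 andbT sqrf_eq0.
have h2 : 0 <= \sum_(i < r | i != j) v 0 i * v^T i 0.
  by apply: sumr_ge0 => i _; rewrite mxE -expr2 sqr_ge0.
by apply: (lt_le_trans h1); rewrite lerDl.
Qed.

Lemma quadL (R : realType) p n c (L : 'M[R]_(p, n)) (X : 'M[R]_(n, c)) (z : 'rV[R]_c) :
  z *m ((L *m X)^T *m (L *m X)) *m z^T = (z *m X^T) *m L^T *m L *m (z *m X^T)^T.
Proof. by rewrite !trmx_mul trmxK !mulmxA. Qed.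

Unset Implicit Arguments. Set Strict Implicit.
Theorem theorem3 (R : realType) (m n p : nat) (A : 'M[R]_(m, n)) (b : 'cV[R]_m)
  (L : 'M[R]_(p, n)) (k : nat)
  (hk : (2 <= k <= n.-1)%N)
  (hnb : gk_no_breakdown A b k.+1)
  (Qp1 : 'M[R]_(n, n - k)) (Qp2 : 'M[R]_(n, n - k.+1))
  (hQ1 : (row_mx (GKQ A b k) Qp1)^T *m row_mx (GKQ A b k) Qp1 = 1%:M)
  (hQ2 : (row_mx (GKQ A b k.+1) Qp2)^T *m row_mx (GKQ A b k.+1) Qp2 = 1%:M)
  (hp : (n - k <= p)%N)
  (s1 s2 : seq R)
  (hs1 : singular_values (L *m Qp1) s1)
  (hs2 : singular_values (L *m Qp2) s2) :
  (kappa_sv s2 <= kappa_sv s1)%E.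
Proof.
move: hs1 hs2 => [sz1 [so1 [nn1 cp1]]] [sz2 [so2 [nn2 cp2]]].
have kn : (k <= n)%N by lia.
set Qk := GKQ A b k; set Qk1 := GKQ A b k.+1.
have F1 : Qk *m Qk^T + Qp1 *m Qp1^T = 1%:M.
  by have := orth_sq (subnKC kn) hQ1; rewrite tr_row_mx mul_row_col.
move: hQ2; rewrite tr_row_mx mul_col_row scalar_mx_block => /eq_block_mx [_ _ H21 H22].
have F3 : Qp2^T *m Qk = 0.
  apply/matrixP => i j; move/matrixP: H21 => /(_ i (widen_ord (leqnSn k) j)).
  rewrite !mxE => h; rewrite -[RHS]h; apply: eq_bigr => l _; rewrite /Qk !mxE /=; done.
have F4' : Qp2^T *m Qp1 *m Qp1^T = Qp2^T.
  have F4 : Qp1 *m Qp1^T *m Qp2 = Qp2.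
    rewrite -[RHS]mul1mx -F1 mulmxDl -(mulmxA Qk).
    have -> : Qk^T *m Qp2 = 0 by rewrite -[Qk^T *m Qp2]trmxK trmx_mul trmxK F3 trmx0.
    by rewrite mulmx0 add0r.
  by have := congr1 trmx F4; rewrite !trmx_mul trmxK mulmxA.
set G1 := (L *m Qp1)^T *m (L *m Qp1).
set G2 := (L *m Qp2)^T *m (L *m Qp2).
have G1T : G1^T = G1 by rewrite /G1 trmx_mul trmxK.
case E1: s1 sz1 so1 nn1 cp1 => [|x1 s1'] sz1 so1 nn1 cp1.
  exfalso; move: sz1 hk => /= sz1 /andP[h1]; rewrite -subn1; lia.
set lo := (last x1 s1')^+2; set hi := x1^+2.
have bt : forall x, x \in map (fun x => x^+2) (x1 :: s1') -> lo <= x <= hi.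
  move=> _ /mapP [x xin ->].
  have /andP[h1 h2] := path_bounds so1 xin.
  have l0 : 0 <= last x1 s1' by move/allP: nn1; apply; exact: mem_last.
  have x0 : 0 <= x by move/allP: nn1; apply.
  have x10 : 0 <= x1 := le_trans x0 h2.
  by rewrite /lo /hi !ler_sqr ?nnegrE ?h1 ?h2.
have cp1' : char_poly G1 = \prod_(x <- map (fun x => x^+2) (x1 :: s1')) ('X - x%:P).
  by rewrite big_map.
have key : forall y, y \in s2 -> lo <= y^+2 <= hi.
  move=> y ys.
  have : eigenvalue G2 (y^+2).
    rewrite eigenvalue_root_char cp2.
    rewrite (_ : \prod_(x <- s2) _ = \prod_(x <- map (fun x => x^+2) s2) ('X - x%:P)); last by rewrite big_map.
    by rewrite root_prod_XsubC; apply: map_f.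
  move=> /eigenvalueP [v vG vn0].
  set u := v *m Qp2^T *m Qp1.
  have huw : u *m Qp1^T = v *m Qp2^T.
    by rewrite /u -!mulmxA [Qp2^T *m _]mulmxA F4'.
  have Hu : u *m G1 *m u^T = v *m G2 *m v^T by rewrite /G1 /G2 !quadL huw.
  have Huu : u *m u^T = v *m v^T.
    rewrite {2}/u trmx_mul mulmxA huw trmx_mul trmxK !mulmxA -(mulmxA v) H22.
    by rewrite mulmx1.
  have Hmu : (v *m G2 *m v^T) 0 0 = y^+2 * (v *m v^T) 0 0.
    by rewrite vG -scalemxAl mxE.
  have vp := vvT_gt0 vn0.
  have /andP[r1 r2] := rayleigh G1T cp1' bt u.
  rewrite Hu Huu Hmu in r1 r2.
  by rewrite -(ler_pM2r vp) r1 -(ler_pM2r vp) r2.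
case E2: s2 key sz2 so2 nn2 => [|y s2'] key sz2 so2 nn2.
  by rewrite -E1; apply: kappa_ge1; rewrite E1.
rewrite /kappa_sv /=.
set l1 := last x1 s1'; set l2 := last y s2'.
have [l1e|l1n0] := eqVneq l1 0; first exact: leey.
have l10 : 0 <= l1 by move/allP: nn1; apply; exact: mem_last.
have l1p : 0 < l1 by rewrite lt0r l10 l1n0.
have l20 : 0 <= l2 by move/allP: nn2; apply; exact: mem_last.
have y0 : 0 <= y by move/allP: nn2; apply; exact: mem_head.
have x10 : 0 <= x1 by move/allP: nn1; apply; exact: mem_head.
have /andP[k1 _] := key l2 (mem_last _ _).
have /andP[_ k2] := key y (mem_head _ _).
rewrite /lo /hi ler_sqr ?nnegrE // in k1 k2.
have l2p : 0 < l2 := lt_le_trans l1p k1.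
rewrite (negbTE (lt0r_neq0 l2p)) lee_fin ler_pdivrMr // mulrAC ler_pdivlMr //.
rewrite ler_sqr ?nnegrE // in k2.
exact: (ler_pM y0 l10 k2 k1).
Qed.
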